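(* The map $\pi^\infty:J^\infty_0(\mathbb C^p,V)/G\to J^\infty_0(\mathbb C^p,Z)$ is injective: if $F_1,F_2:\mathbb C[V]\to\mathbb C[[X_1,\dots,X_p]]$ are $\mathbb C$-algebra homomorphisms with $F_1|_{\mathbb C[V]^G}=F_2|_{\mathbb C[V]^G}$, then there is $g\in G$ with $F_2=F_1\circ g^*$, where $g^*\varphi=\varphi\circ g$.
   Context: $V$ is a finite-dimensional complex vector space, $G\subset GL(V)$ a finite group, $Z=V/G$ the orbit space with $\mathbb C[Z]=\mathbb C[V]^G$ and quotient map $\pi$. $J^\infty_0(\mathbb C^p,X)$ denotes the set of $\mathbb C$-algebra homomorphisms $\mathbb C[X]\to\mathbb C[[X_1,\dots,X_p]]$ (formal morphisms); $G$ acts on $J^\infty_0(\mathbb C^p,V)$ through its action on $\mathbb C[V]$, and $\pi^\infty$ is induced by restriction to $\mathbb C[V]^G$. *)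

(* Defs.v *)
From HB Require Import structures.
From mathcomp Require Import all_boot all_order all_algebra all_fingroup.
From mathcomp Require Import mxrepresentation.
From mathcomp Require Import mpoly.
From mathcomp Require Import complex.
From mathcomp Require Import reals.

Set Implicit Arguments.
Unset Strict Implicit.
Unset Printing Implicit Defensive.

Import GRing.Theory.
Local Open Scope ring_scope.

Section PowerSeries.
Variables (K : comNzRingType) (p : nat).

Definition pseries := 'X_{1..p} -> K.

Definition ps_add (f g : pseries) : pseries := fun m => f m + g m.

(* total degree <= mdeg m, so a ranges over the finite type of monomials of  *)
(* degree < (mdeg m).+1.                                                      *)
Definition ps_mul (f g : pseries) : pseries := fun m =>
  \sum_(a : 'X_{1..p < (mdeg m).+1} | (a <= m)%MM) f a * g (m - a)%MM.

Definition ps_one : pseries := fun m => (m == 0%MM)%:R.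

Definition ps_scale (c : K) (f : pseries) : pseries := fun m => c * f m.

End PowerSeries.

Definition is_alg_hom (K : comNzRingType) (n p : nat)
    (F : {mpoly K[n]} -> pseries K p) : Prop :=
  [/\ forall P Q, F (P + Q) = ps_add (F P) (F Q),
      forall P Q, F (P * Q) = ps_mul (F P) (F Q),
      F 1 = @ps_one K p &
      forall (c : K) P, F (c *: P) = ps_scale c (F P)].

(* For a linear map A of V = K^n (acting on column vectors), the pullback     *)
(* A^* phi = phi o A on polynomial functions: x_i |-> sum_j A i j x_j.        *)
Definition pullback (K : comNzRingType) (n : nat) (A : 'M[K]_n)
    (P : {mpoly K[n]}) : {mpoly K[n]} :=
  P \mPo [tuple \sum_(j < n) A i j *: 'X_j | i < n].

Definition invariant_poly (K : fieldType) (gT : finGroupType) (G : {group gT})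
    (n : nat) (rG : mx_representation K G n) (P : {mpoly K[n]}) : Prop :=
  forall g, g \in G -> pullback (rG g) P = P.

(* Main.v *)
Require Import Defs.
From HB Require Import structures.
From mathcomp Require Import all_boot all_order all_algebra all_fingroup.
From mathcomp Require Import mxrepresentation.
From mathcomp Require Import mpoly.
From mathcomp Require Import complex.
From mathcomp Require Import reals.
From Stdlib Require Import Classical FunctionalExtensionality.
From mathcomp Require Import zify.

Set Implicit Arguments.
Unset Strict Implicit.
Unset Printing Implicit Defensive.
Local Open Scope ring_scope.
Import Order.TTheory GRing.Theory.
Section Trunc.
Variables (K : comNzRingType) (p : nat).

Definition trunc (D : nat) (f : pseries K p) : {mpoly K[p]} :=
  \sum_(m : 'X_{1..p < D}) f m *: 'X_[m].

Lemma mcoeff_trunc D f m : (trunc D f)@_m = if (mdeg m < D)%N then f m else 0.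
Proof.
case: ltnP => h; first exact: mcoeff_mpoly.
rewrite /trunc raddf_sum big1 // => m' _.
rewrite /= mcoeffZ mcoeffX.
case: eqP => [e|]; last by rewrite mulr0.
by move: (bmdeg m'); rewrite e ltnNge h.
Qed.

Lemma mdeg_split (m a b : 'X_{1..p}) : m = (a + b)%MM ->
  (mdeg a <= mdeg m)%N /\ (mdeg b <= mdeg m)%N.
Proof. by move=> ->; rewrite mdegD leq_addr leq_addl. Qed.

Definition eqD D (u v : {mpoly K[p]}) := forall m, (mdeg m < D)%N -> u@_m = v@_m.

Lemma eqD_refl D u : eqD D u u. Proof. by []. Qed.
Lemma eqD_sym D u v : eqD D u v -> eqD D v u.
Proof. by move=> h m hm; rewrite h. Qed.
Lemma eqD_trans D u v w : eqD D u v -> eqD D v w -> eqD D u w.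
Proof. by move=> h1 h2 m hm; rewrite h1 ?h2. Qed.
Lemma eqD_add D u u' w w' : eqD D u u' -> eqD D w w' -> eqD D (u + w) (u' + w').
Proof. by move=> h1 h2 m hm; rewrite !mcoeffD h1 ?h2. Qed.

Lemma eqD_mul D u u' w w' : eqD D u u' -> eqD D w w' -> eqD D (u * w) (u' * w').
Proof.
move=> hu hw m hm; rewrite !mcoeffM; apply: eq_bigr => k /eqP hk.
have [h1 h2] := mdeg_split hk.
rewrite hu ?hw //; exact: leq_ltn_trans hm.
Qed.

Lemma eqD_sum D (I : Type) (r : seq I) (P : pred I) (F G : I -> {mpoly K[p]}) :
  (forall i, P i -> eqD D (F i) (G i)) ->
  eqD D (\sum_(i <- r | P i) F i) (\sum_(i <- r | P i) G i).
Proof.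
move=> h; apply: (big_ind2 (eqD D)) => //; first exact: eqD_add.
Qed.

Lemma trunc_mul D f g : eqD D (trunc D (ps_mul f g)) (trunc D f * trunc D g).
Proof.
move=> m hm; rewrite mcoeff_trunc hm mcoeffM /ps_mul.
have -> : \sum_(k : 'X_{1..p < (mdeg m).+1, (mdeg m).+1} | m == (k.1 + k.2)%MM)
     (trunc D f)@_k.1 * (trunc D g)@_k.2 =
   \sum_(k : 'X_{1..p < (mdeg m).+1, (mdeg m).+1} | true && (m == (k.1 + k.2)%MM))
     f k.1 * g k.2.
  apply: eq_bigr => k /eqP hk.
  have [h1 h2] := mdeg_split hk.
  rewrite !mcoeff_trunc (leq_ltn_trans h1 hm) (leq_ltn_trans h2 hm) //.
rewrite -(pair_big_dep xpredT (fun a b : 'X_{1..p < (mdeg m).+1} => m == (a + b)%MM) (fun a b : 'X_{1..p < (mdeg m).+1} => f a * g b)) /=.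
rewrite big_mkcond /=; apply: eq_bigr => a _.
case: ifP => ham.
  have hb : (mdeg (m - a)%MM < (mdeg m).+1)%N by rewrite ltnS mdegB.
  rewrite (big_pred1 (BMultinom hb)) // => b /=.
  apply/eqP/eqP => [e|->].
    apply: val_inj => /=.
    have := congr1 (fun x => (x - bmnm a)%MM) e.
    by rewrite /= [(bmnm a + _)%MM]addmC addmK => ->.
  by rewrite /= addmC submK // ham.
rewrite big1 // => b /eqP e.
by have := lem_addr (bmnm a) (bmnm b); rewrite -e ham.
Qed.

End Trunc.
Section Closure.
Variables (K : comNzRingType) (n : nat).

Lemma mpoly_closure (S : {mpoly K[n]} -> Prop) :
  S 0 -> (forall u v, S u -> S v -> S (u + v)) ->
  (forall c u, S u -> S (c *: u)) -> S 1 ->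
  (forall u v, S u -> S v -> S (u * v)) -> (forall i, S 'X_i) ->
  forall P, S P.
Proof.
move=> S0 SD SZ S1 SM SX; elim/mpolyind => // c m P _ _ SP.
apply: SD => //; apply: SZ; rewrite mpolyXE_id.
apply: (big_ind S) => // i _; elim: (m i) => [|k IH]; first by rewrite expr0.
by rewrite exprS; apply: SM.
Qed.

End Closure.

Section AlgHom.
Variables (K : comNzRingType) (n p : nat) (F : {mpoly K[n]} -> pseries K p).
Hypothesis hF : is_alg_hom F.

Lemma FD P Q m : F (P + Q) m = F P m + F Q m.
Proof. by case: hF => -> _ _ _. Qed.
Lemma FZ c P m : F (c *: P) m = c * F P m.
Proof. by case: hF => _ _ _ ->. Qed.
Lemma F0 m : F 0 m = 0.
Proof. by rewrite -(scale0r (0 : {mpoly K[n]})) FZ mul0r. Qed.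
Lemma FN P m : F (- P) m = - F P m.
Proof. by rewrite -scaleN1r FZ mulN1r. Qed.
Lemma FB P Q m : F (P - Q) m = F P m - F Q m.
Proof. by rewrite FD FN. Qed.
Lemma F_sum (I : Type) (r : seq I) (Pr : pred I) (G : I -> {mpoly K[n]}) m :
  F (\sum_(i <- r | Pr i) G i) m = \sum_(i <- r | Pr i) F (G i) m.
Proof.
apply: (big_rec2 (fun x y => F y m = x)); first by rewrite F0.
by move=> i a b _ <-; rewrite FD.
Qed.

Definition thlq D : n.-tuple {mpoly K[p]} := [tuple trunc D (F 'X_i) | i < n].
Local Notation theta D := (comp_mpoly (thlq D)).

Lemma thetaE D P : eqD D (trunc D (F P)) (theta D P).
Proof.
elim/mpoly_closure: P.
- by move=> m hm; rewrite mcoeff_trunc hm F0 raddf0 mcoeff0.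
- move=> u v hu hv m hm; rewrite raddfD mcoeffD -hu // -hv //.
  by rewrite !mcoeff_trunc hm FD.
- move=> c u hu m hm; rewrite linearZ mcoeffZ -hu //.
  by rewrite !mcoeff_trunc hm FZ.
- move=> m hm; rewrite rmorph1 mcoeff1 mcoeff_trunc hm.
  by case: hF => _ _ -> _.
- move=> u v hu hv; rewrite rmorphM.
  case: hF => _ -> _ _.
  apply: eqD_trans; first exact: trunc_mul.
  exact: eqD_mul.
- move=> i; rewrite comp_mpolyXU -tnth_nth tnth_mktuple.
  exact: eqD_refl.
Qed.

End AlgHom.
Notation theta F D := (comp_mpoly (thlq F D)).
Section Low.
Variables (K : idomainType) (p : nat).

Lemma le_cases (x y : 'X_{1..p}) : (x <= y)%O -> (x < y)%O \/ x = y.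
Proof. by rewrite le_eqVlt => /orP[/eqP->|->]; [right|left]. Qed.

Definition low (u : {mpoly K[p]}) (a : 'X_{1..p}) :=
  forall m, (m < a)%O -> u@_m = 0.

Lemma lowM u w a b : low u a -> low w b ->
  low (u * w) (a + b)%MM /\ (u * w)@_(a + b)%MM = u@_a * w@_b.
Proof.
move=> hu hw; split.
  move=> c hc; rewrite mcoeffM big1 // => k /eqP hk.
  case: (ltP (bmnm k.1) a) => [h1|h1]; first by rewrite hu // mul0r.
  case: (ltP (bmnm k.2) b) => [h2|h2]; first by rewrite hw // mulr0.
  have := lem_add h1 h2; rewrite -hk => h.
  by have := lt_le_trans hc h; rewrite ltxx.
have ha : (mdeg a < (mdeg (a + b)%MM).+1)%N by rewrite ltnS mdegD leq_addr.
have hb : (mdeg b < (mdeg (a + b)%MM).+1)%N by rewrite ltnS mdegD leq_addl.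
rewrite mcoeffM (bigD1 (BMultinom ha, BMultinom hb)) //= big1 ?addr0 // => k /andP [/eqP hk hne].
case: (ltP (bmnm k.1) a) => [h1|h1]; first by rewrite hu // mul0r.
case: (ltP (bmnm k.2) b) => [h2|h2]; first by rewrite hw // mulr0.
have [l1|e1] := le_cases h1.
  by have := ltmc_le_add l1 h2; rewrite -hk ltxx.
have [l2|e2] := le_cases h2.
  by have := lemc_lt_add h1 l2; rewrite -hk ltxx.
exfalso; move/eqP: hne; apply.
case: k hk h1 h2 e1 e2 => [k1 k2] /= _ _ _ e1 e2.
by congr pair; apply: val_inj.
Qed.

Lemma lowP (I : Type) (r : seq I) (P : pred I) (U : I -> {mpoly K[p]}) (A : I -> 'X_{1..p}) :
  (forall i, P i -> low (U i) (A i)) ->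
  low (\prod_(i <- r | P i) U i) (\sum_(i <- r | P i) A i)%MM /\
  (\prod_(i <- r | P i) U i)@_(\sum_(i <- r | P i) A i)%MM = \prod_(i <- r | P i) (U i)@_(A i).
Proof.
move=> hl; elim: r => [|i r [IH1 IH2]].
  rewrite !big_nil; split; last by rewrite mcoeff1 eqxx.
  by move=> m; rewrite ltNge le0x.
rewrite !big_cons; case: ifP => hi //.
have [h1 h2] := lowM (hl i hi) IH1.
by split => //; rewrite h2 IH2.
Qed.

End Low.
Section Pullback.
Variables (K : fieldType) (n : nat).
Implicit Types (A B : 'M[K]_n) (u v P : {mpoly K[n]}).

Definition plq (A : 'M[K]_n) : n.-tuple {mpoly K[n]} :=
  [tuple \sum_(j < n) A i j *: 'X_j | i < n].

Lemma pbE A P : pullback A P = comp_mpoly (plq A) P.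
Proof. by []. Qed.
Opaque pullback.

Lemma pbD A u v : pullback A (u + v) = pullback A u + pullback A v.
Proof. by rewrite !pbE raddfD. Qed.
Lemma pbZ A c u : pullback A (c *: u) = c *: pullback A u.
Proof. by rewrite !pbE linearZ. Qed.
Lemma pbM A u v : pullback A (u * v) = pullback A u * pullback A v.
Proof. by rewrite !pbE rmorphM. Qed.
Lemma pb0 A : pullback A 0 = 0.
Proof. by rewrite pbE raddf0. Qed.
Lemma pb1' A : pullback A 1 = 1.
Proof. by rewrite pbE rmorph1. Qed.
Lemma pbX A i : pullback A 'X_i = \sum_(j < n) A i j *: 'X_j.
Proof. by rewrite pbE comp_mpolyXU -tnth_nth tnth_mktuple. Qed.
Lemma pb_sum A (I : Type) (r : seq I) (Pr : pred I) (G : I -> {mpoly K[n]}) :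
  pullback A (\sum_(i <- r | Pr i) G i) = \sum_(i <- r | Pr i) pullback A (G i).
Proof. by rewrite pbE raddf_sum. Qed.

Lemma pb_comp A B P : pullback B (pullback A P) = pullback (A *m B) P.
Proof.
elim/mpoly_closure: P.
- by rewrite !pb0.
- by move=> u v hu hv; rewrite !pbD hu hv.
- by move=> c u hu; rewrite !pbZ hu.
- by rewrite !pb1'.
- by move=> u v hu hv; rewrite !pbM hu hv.
- move=> i; rewrite !pbX pb_sum.
  under eq_bigr do rewrite pbZ pbX scaler_sumr.
  rewrite exchange_big /=; apply: eq_bigr => k _.
  rewrite mxE scaler_suml; apply: eq_bigr => j _.
  by rewrite scalerA.
Qed.

Lemma pb_id P : pullback 1%:M P = P.
Proof.
elim/mpoly_closure: P.
- by rewrite !pb0.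
- by move=> u v hu hv; rewrite !pbD hu hv.
- by move=> c u hu; rewrite !pbZ hu.
- by rewrite !pb1'.
- by move=> u v hu hv; rewrite !pbM hu hv.
- move=> i; rewrite pbX (bigD1 i) //= mxE eqxx scale1r big1 ?addr0 // => j hj.
  by rewrite mxE eq_sym (negbTE hj) scale0r.
Qed.

End Pullback.
Lemma prod_eq0_at (R : comNzRingType) (I : finType) (P : pred I) (F : I -> R) i :
  P i -> F i = 0 -> \prod_(j | P j) F j = 0.
Proof. by move=> Pi Fi; rewrite (bigD1 i) //= Fi mul0r. Qed.

Section Main.
Variables (K : numFieldType) (n p : nat) (gT : finGroupType) (G : {group gT}).
Variables (rG : mx_representation K G n) (F1 F2 : {mpoly K[n]} -> pseries K p).
Hypotheses (hF1 : is_alg_hom F1) (hF2 : is_alg_hom F2).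
Hypothesis hinv : forall P, invariant_poly rG P -> F1 P = F2 P.

Definition Qp (l : {mpoly K[n]}) : {poly {mpoly K[n]}} :=
  \prod_(g in G) ('X - (pullback (rG g) l)%:P).

Lemma Qp_inv l k : invariant_poly rG (Qp l)`_k.
Proof.
move=> h hh.
have e : map_poly (comp_mpoly (plq (rG h))) (Qp l) = Qp l.
  rewrite /Qp rmorph_prod.
  rewrite [LHS](eq_bigr (fun g => 'X - (pullback (rG h) (pullback (rG g) l))%:P)); last first.
    by move=> g _; exact: (map_polyXsubC (comp_mpoly (plq (rG h))) (pullback (rG g) l)).
  rewrite [LHS](eq_bigr (fun g => 'X - (pullback (rG (g * h)%g) l)%:P)); last first.
    by move=> g hg; rewrite pb_comp (repr_mxM rG hg hh).
  rewrite [RHS](reindex_inj (mulIg h)) /=; apply: eq_bigl => g.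
  by rewrite groupMr.
by rewrite -{2}e coef_map.
Qed.

Lemma Qp_root l : (Qp l).[l] = 0.
Proof.
rewrite /Qp horner_prod; apply: (prod_eq0_at (i := 1%g)); first exact: group1.
have h0 : ('X - l%:P).[l] = 0 by rewrite hornerXsubC subrr.
by rewrite repr_mx1 pb_id.
Qed.

Lemma min_supp (f : 'X_{1..p} -> K) m0 : f m0 != 0 ->
  exists mu, f mu != 0 /\ forall m, (m < mu)%O -> f m = 0.
Proof.
move: m0; apply: ltmwf => m0 IH h.
case: (classic (exists m, (m < m0)%O /\ f m != 0)) => [[m [hm hf]]|hn].
  exact: IH hm hf.
exists m0; split => // m hm; case: (eqVneq (f m) 0) => // hf.
by exfalso; apply: hn; exists m.
Qed.

Lemma key l : exists2 g, g \in G & forall m, F2 l m = F1 (pullback (rG g) l) m.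
Proof.
apply: NNPP => hneg.
pose d g m := F2 l m - F1 (pullback (rG g) l) m.
have H : forall g : gT, exists mu : 'X_{1..p},
    g \in G -> d g mu != 0 /\ forall m, (m < mu)%O -> d g m = 0.
  move=> g; case: (boolP (g \in G)) => hg; last by exists 0%MM.
  have [m0 hm0] : exists m, d g m != 0.
    apply: NNPP => hn; apply: hneg; exists g => // m; apply/eqP.
    rewrite -subr_eq0; case: (eqVneq (d g m) 0) => // hm.
    by exfalso; apply: hn; exists m.
  have [mu hmu] := min_supp hm0.
  by exists mu.
have [mu hmu] := fin_all_exists H.
pose M := (\sum_(g in G) mu g)%MM.
pose D := (mdeg M).+1.
pose u g := theta F2 D l - theta F1 D (pullback (rG g) l).
have hu : forall g m, (mdeg m < D)%N -> (u g)@_m = d g m.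
  move=> g m hm; rewrite /u mcoeffB -(thetaE (D:=D) hF2 l hm).
  by rewrite -(thetaE (D:=D) hF1 _ hm) !mcoeff_trunc hm.
have hdeg : forall g, g \in G -> (mdeg (mu g) <= mdeg M)%N.
  by move=> g hg; rewrite /M (bigD1 g) //= mdegD leq_addr.
have hlow : forall g, g \in G -> low (u g) (mu g).
  move=> g hg m hm; rewrite hu; first by case: (hmu g hg) => _ ->.
  rewrite /D ltnS; apply: leq_trans (hdeg g hg); exact: lemc_mdeg (ltW hm).
have [_ hc] := lowP (index_enum gT) (P := fun g => g \in G) hlow.
have hne : (\prod_(g in G) u g)@_M != 0.
  rewrite hc; apply/prodf_neq0 => g hg.
  by rewrite hu; [case: (hmu g hg) | rewrite /D ltnS hdeg].
have h0 : eqD D (\prod_(g in G) u g) 0.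
  have -> : \prod_(g in G) u g = (map_poly (theta F1 D) (Qp l)).[theta F2 D l].
    rewrite /Qp rmorph_prod horner_prod; apply: eq_bigr => g _.
    have e2 : (map_poly (theta F1 D) ('X - (pullback (rG g) l)%:P)).[theta F2 D l]
        = theta F2 D l - theta F1 D (pullback (rG g) l).
      by rewrite (map_polyXsubC (theta F1 D)) hornerXsubC.
    exact: (esym e2).
  have hs : forall f : {rmorphism {mpoly K[n]} -> {mpoly K[p]}},
      (size (map_poly f (Qp l)) <= size (Qp l))%N.
    by move=> f; rewrite /map_poly; apply: size_poly.
  rewrite (horner_coef_wide _ (hs _)).
  have e0 : \sum_(k < size (Qp l)) (theta F2 D (Qp l)`_k) * (theta F2 D l) ^+ k = 0.
    have e1 : (map_poly (theta F2 D) (Qp l)).[theta F2 D l] = 0.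
      by rewrite horner_map Qp_root rmorph0.
    apply: (etrans _ e1); rewrite (horner_coef_wide _ (hs _)).
    by apply: eq_bigr => k _; rewrite coef_map.
  rewrite -[X in eqD D _ X]e0.
  apply: eqD_sum => k _; apply: eqD_mul; last exact: eqD_refl.
  rewrite coef_map /=.
  apply: eqD_trans; first exact: eqD_sym (thetaE (D:=D) hF1 _).
  rewrite (hinv (Qp_inv l k)); exact: (thetaE (D:=D) hF2 _).
move/negP: hne; apply; by rewrite h0 ?mcoeff0 // /D ltnSn.
Qed.

End Main.
Section Final.
Variables (K : numFieldType) (n p : nat) (gT : finGroupType) (G : {group gT}).
Variables (rG : mx_representation K G n) (F1 F2 : {mpoly K[n]} -> pseries K p).
Hypotheses (hF1 : is_alg_hom F1) (hF2 : is_alg_hom F2).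
Hypothesis hinv : forall P, invariant_poly rG P -> F1 P = F2 P.

Lemma exists_g : exists2 g, g \in G &
  forall (i : 'I_n) m, F2 'X_i m = F1 (pullback (rG g) 'X_i) m.
Proof.
apply: NNPP => hneg.
pose d g (i : 'I_n) m := F2 'X_i m - F1 (pullback (rG g) 'X_i) m.
have H : forall g : gT, exists mg : 'X_{1..p},
    g \in G -> exists i : 'I_n, d g i mg != 0.
  move=> g; case: (boolP (g \in G)) => hg; last by exists 0%MM.
  apply: NNPP => hn; apply: hneg; exists g => // i m.
  case: (eqVneq (d g i m) 0) => [/eqP|hd]; first by rewrite subr_eq0 => /eqP.
  by exfalso; apply: hn; exists m => _; exists i.
have [mg hmg] := fin_all_exists H.
pose dn g (i : nat) := if insub i is Some j then d g j (mg g) else 0.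
pose Pg g : {poly K} := \poly_(i < n) dn g i.
have dnE : forall g (i : 'I_n), dn g i = d g i (mg g).
  by move=> g i; rewrite /dn valK.
have Pg_neq0 : forall g, g \in G -> Pg g != 0.
  move=> g hg; have [i hi] := hmg g hg.
  apply/eqP => e; move: (congr1 (fun q : {poly K} => q`_i) e).
  rewrite coef_poly ltn_ord dnE coef0 => e2.
  by move: hi; rewrite e2 eqxx.
pose lt (t : K) : {mpoly K[n]} := \sum_(i < n) (t ^+ i) *: 'X_i.
have hev : forall t g, g \in G ->
    (forall m, F2 (lt t) m = F1 (pullback (rG g) (lt t)) m) -> (Pg g).[t] = 0.
  move=> t g hg he.
  have e1 : F2 (lt t) (mg g) = \sum_(i < n) t ^+ i * F2 'X_i (mg g).
    by rewrite /lt (F_sum hF2); apply: eq_bigr => i _; rewrite (FZ hF2).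
  have e2 : F1 (pullback (rG g) (lt t)) (mg g) =
      \sum_(i < n) t ^+ i * F1 (pullback (rG g) 'X_i) (mg g).
    by rewrite /lt pb_sum (F_sum hF1); apply: eq_bigr => i _; rewrite pbZ (FZ hF1).
  rewrite horner_poly.
  transitivity (F2 (lt t) (mg g) - F1 (pullback (rG g) (lt t)) (mg g)); last first.
    by rewrite he subrr.
  rewrite e1 e2 -sumrB; apply: eq_bigr => i _.
  by rewrite dnE /d mulrC mulrBr.
pose N := (#|G| * n)%N.
have H2 : forall k : 'I_N, exists g, g \in G /\ (Pg g).[k%:R] = 0.
  move=> k; have [g hg he] := key hF1 hF2 hinv (lt k%:R).
  by exists g; split => //; apply: hev.
have [gk hgk] := fin_all_exists H2.
pose S g := [set k : 'I_N | gk k == g].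
have hS : forall g, g \in G -> (#|S g| < n)%N.
  move=> g hg.
  pose rs := [seq (val k)%:R : K | k <- enum (S g)].
  have hr : (size rs < size (Pg g))%N.
    apply: max_poly_roots (Pg_neq0 g hg) _ _.
      apply/allP => x /mapP [k hk ->]; rewrite mem_enum inE in hk.
      have [_ e] := hgk k; rewrite /root; move/eqP: hk => hk.
      by rewrite -hk e.
    rewrite map_inj_in_uniq ?enum_uniq // => a b _ _ /eqP.
    by rewrite Num.Theory.eqr_nat => /eqP /val_inj.
  move: hr; rewrite size_map -cardE => hr.
  exact: leq_trans hr (size_poly _ _).
have hsum : (\sum_(g in G) #|S g| = N)%N.
  transitivity (\sum_(g in G) \sum_(k : 'I_N) (gk k == g : nat))%N.
    apply: eq_bigr => g _; rewrite -sum1_card big_mkcond /=.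
    by apply: eq_bigr => k _; rewrite inE; case: eqP.
  rewrite exchange_big /=.
  transitivity (\sum_(k : 'I_N) 1)%N; last by rewrite big_const_ord iter_addn_0 mul1n.
  apply: eq_bigr => k _; have [hk _] := hgk k.
  rewrite (bigD1 (gk k)) //= eqxx big1 ?addn0 // => g /andP [_ hne].
  by rewrite eq_sym (negbTE hne).
have hle : (\sum_(g in G) (#|S g|).+1 <= \sum_(g in G) n)%N.
  by apply: leq_sum => g hg; apply: hS.
have e : (\sum_(g in G) (#|S g|).+1 = \sum_(g in G) #|S g| + #|G|)%N.
  by rewrite -sum1_card -big_split /=; apply: eq_bigr => g _; rewrite addn1.
move: hle; rewrite sum_nat_const e hsum /N.
have := cardG_gt0 G.
lia.
Qed.

Lemma main_generic : exists2 g, g \in G & forall P, F2 P = F1 (pullback (rG g) P).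
Proof.
have [g hg hX] := exists_g; exists g => //.
case: hF1 => D1 M1 O1 Z1; case: hF2 => D2 M2 O2 Z2.
elim/mpoly_closure.
- apply: functional_extensionality => m.
  by rewrite pb0 (F0 hF2) (F0 hF1).
- by move=> u v hu hv; rewrite pbD D1 D2 hu hv.
- by move=> c u hu; rewrite pbZ Z1 Z2 hu.
- by rewrite pb1' O1 O2.
- by move=> u v hu hv; rewrite pbM M1 M2 hu hv.
- by move=> i; apply: functional_extensionality => m; exact: hX.
Qed.

End Final.

Theorem corollary5p4 (R : realType) (n p : nat) (gT : finGroupType)
    (G : {group gT}) (rG : mx_representation R[i] G n)
    (F1 F2 : {mpoly R[i][n]} -> pseries R[i] p) :
  is_alg_hom F1 -> is_alg_hom F2 ->
  (forall P, invariant_poly rG P -> F1 P = F2 P) ->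
  exists2 g, g \in G & forall P, F2 P = F1 (pullback (rG g) P).
Proof.
move=> h1 h2 h3; exact: (main_generic h1 h2 h3).
Qed.
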